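(* Let $G$ be a finite group and $[H],[K]\in\widetilde\Pi(G)$. Let \[X=\bigcap_{\substack{\bar L\in\mathcal{L}(G)\\ \pi_e(H),\pi_e(K)\subseteq\pi_e(\bar L)}}\pi_e(\bar L).\] Then $\{[H],[K]\}$ has a least upper bound in $\widetilde\Pi(G)$ if and only if there exists a subgroup $L'\le G$ with $\pi_e(L')=X$, and in that case the least upper bound is $[L']$. Similarly, let \[Y=\bigcup_{\substack{\widehat L\in\mathcal{L}(G)\\ \pi_e(\widehat L)\subseteq\pi_e(H)\text{ and }\pi_e(\widehat L)\subseteq\pi_e(K)}}\pi_e(\widehat L).\] Then $\{[H],[K]\}$ has a greatest lower bound in $\widetilde\Pi(G)$ if and only if there exists a subgroup $L''\le G$ with $\pi_e(L'')=Y$, and in that case the greatest lower bound is $[L'']$.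
   Context: For a finite group $G$ and a subgroup $H\le G$, let $\pi_e(H)=\{o(x)\mid x\in H\}$. Let $\mathcal{L}(G)$ be the set of subgroups of $G$; define $H_1\equiv H_2$ iff $\pi_e(H_1)=\pi_e(H_2)$, with class $[H]$. The poset $\widetilde\Pi(G)$ is $\mathcal{L}(G)/\!\equiv$ ordered by $[H_1]\lesssim[H_2]$ iff $\pi_e(H_1)\subseteq\pi_e(H_2)$. *)

(* Defs.v *)
From mathcomp Require Import all_boot all_fingroup.
Set Implicit Arguments. Unset Strict Implicit. Unset Printing Implicit Defensive.
Local Open Scope group_scope.

Definition pi_e (gT : finGroupType) (A : {set gT}) : pred nat :=
  [pred n | [exists x in A, #[x] == n]].

(* [A] <~ [B] in Pi~(G): pi_e(A) ⊆ pi_e(B). *)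
Definition pe_le (gT : finGroupType) (A B : {set gT}) : Prop :=
  {subset pi_e A <= pi_e B}.

Definition is_lub (gT : finGroupType) (G H K L : {group gT}) : Prop :=
  [/\ L \subset G, pe_le H L, pe_le K L &
      forall M : {group gT}, M \subset G -> pe_le H M -> pe_le K M -> pe_le L M].

Definition is_glb (gT : finGroupType) (G H K L : {group gT}) : Prop :=
  [/\ L \subset G, pe_le L H, pe_le L K &
      forall M : {group gT}, M \subset G -> pe_le M H -> pe_le M K -> pe_le M L].

Definition Xset (gT : finGroupType) (G H K : {group gT}) (n : nat) : Prop :=
  forall Lb : {group gT}, Lb \subset G -> pe_le H Lb -> pe_le K Lb -> n \in pi_e Lb.

Definition Yset (gT : finGroupType) (G H K : {group gT}) (n : nat) : Prop :=
  exists Lh : {group gT}, [/\ Lh \subset G, pe_le Lh H, pe_le Lh K & n \in pi_e Lh].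

(* Main.v *)
Require Import Defs.
From mathcomp Require Import all_boot all_fingroup.

Theorem lemma2p4 (gT : finGroupType) (G H K : {group gT})
  (sHG : H \subset G) (sKG : K \subset G) :
  ((exists L : {group gT}, is_lub G H K L) <->
     (exists L' : {group gT}, L' \subset G /\ forall n, n \in pi_e L' <-> Xset G H K n))
  /\ (forall L' : {group gT}, L' \subset G -> (forall n, n \in pi_e L' <-> Xset G H K n) ->
        is_lub G H K L' /\
        forall L : {group gT}, is_lub G H K L -> pi_e L =i pi_e L')
  /\ ((exists L : {group gT}, is_glb G H K L) <->
     (exists L'' : {group gT}, L'' \subset G /\ forall n, n \in pi_e L'' <-> Yset G H K n))
  /\ (forall L'' : {group gT}, L'' \subset G -> (forall n, n \in pi_e L'' <-> Yset G H K n) ->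
        is_glb G H K L'' /\
        forall L : {group gT}, is_glb G H K L -> pi_e L =i pi_e L'').
Proof.
have lubX : forall L' : {group gT}, L' \subset G ->
    (forall n, n \in pi_e L' <-> Xset G H K n) -> is_lub G H K L'.
  move=> L' sL hL; split=> //.
  - by move=> n hn; apply/hL => Lb _ hH _; exact: hH.
  - by move=> n hn; apply/hL => Lb _ _ hK; exact: hK.
  - by move=> M sM hH hK n /hL; apply.
have glbY : forall L'' : {group gT}, L'' \subset G ->
    (forall n, n \in pi_e L'' <-> Yset G H K n) -> is_glb G H K L''.
  move=> L sL hL; split=> //.
  - by move=> n /hL [Lh [_ h1 _ hn]]; exact: h1.
  - by move=> n /hL [Lh [_ _ h2 hn]]; exact: h2.
  - by move=> M sM hH hK n hn; apply/hL; exists M.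
split; [|split; [|split]].
- split.
  + move=> [L [sL hH hK hM]]; exists L; split=> // n; split.
    * by move=> hn Lb sLb hHb hKb; exact: (hM Lb sLb hHb hKb).
    * by move=> hX; exact: hX.
  + by move=> [L' [sL hL]]; exists L'; exact: lubX.
- move=> L' sL hL; split; first exact: lubX.
  move=> L [sL2 hH hK hM] n; have [_ hH' hK' hM'] := lubX L' sL hL.
  apply/idP/idP; [exact: hM | exact: hM'].
- split.
  + move=> [L [sL hH hK hM]]; exists L; split=> // n; split.
    * by move=> hn; exists L.
    * by move=> [Lh [sLh h1 h2 hn]]; exact: (hM Lh sLh h1 h2).
  + by move=> [L'' [sL hL]]; exists L''; exact: glbY.
- move=> L' sL hL; split; first exact: glbY.
  move=> L [sL2 hH hK hM] n; have [_ hH' hK' hM'] := glbY L' sL hL.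
  apply/idP/idP; [exact: hM' | exact: hM].
Qed.
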